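(* Let $\mathcal{X}=[0,1]^2$, let $\mathcal{G}$ be the class of monotone allocations and $\{\mathcal{G}_k\}_{k\ge1}$ the piecewise-linear monotone sieve defined in the context. Fix $M<\infty$, $\kappa\in(0,1/2)$, $A>0$, and let $\mathcal{P}_r$ be the set of distributions under which $X$ has a density with respect to Lebesgue measure on $[0,1]^2$ bounded above by $A$. Then $$\sup_{P\in\mathcal{P}_r\cap\mathcal{P}(M,\kappa)}\big(W^*_{\mathcal{G}}-W^*_{\mathcal{G}_k}\big)\le A\frac{M}{\kappa}2^{-k}\quad\text{for every }k\ge1.$$
   Context: $P$ is the distribution of $(Y,D,X)$ with outcome $Y\in\mathbb{R}$, treatment $D\in\{0,1\}$, covariate $X=(X_1,X_2)\in[0,1]^2$; $e(x)=E_P[D\mid X=x]$. $\mathcal{P}(M,\kappa)$: distributions with support of $Y$ in $[-M/2,M/2]$ and $e(x)\in[\kappa,1-\kappa]$ for all $x$. Welfare: $W(G)=E_P[(\frac{YD}{e(X)}-\frac{Y(1-D)}{1-e(X)})\mathbf{1}\{X\in G\}]$, $W^*_{\mathcal{A}}=\sup_{G\in\mathcal{A}}W(G)$. Monotone allocations: $\mathcal{G}=\{\{(x_1,x_2)\in[0,1]^2:x_2\le f(x_1)\}: f:[0,1]\to[0,1]\text{ non-increasing}\}$. Sieve: for an integer $T$ and $0\le j\le T$, $\psi_{T,j}(x)=1-|Tx-j|$ for $x\in[\frac{j-1}{T},\frac{j+1}{T}]\cap[0,1]$ and $0$ otherwise; with $T=2^{k-1}$, $\mathcal{G}_k=\{\{(x_1,x_2)\in[0,1]^2:x_2\le\sum_{j=0}^T\theta_j\psi_{T,j}(x_1)\}:\theta_0\ge\theta_1\ge\dots\ge\theta_T,\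 \theta_j\in\mathbb{R}\}$ (allocations whose boundary is a non-increasing piecewise-linear function with kinks only at the points $j/T$). *)

(* Defs.v *)
From HB Require Import structures.
From mathcomp Require Import all_boot all_order all_algebra.
From mathcomp Require Import all_classical all_reals all_analysis.
Set Implicit Arguments. Unset Strict Implicit. Unset Printing Implicit Defensive.
Import Order.TTheory GRing.Theory Num.Theory.
Import numFieldNormedType.Exports.
Local Open Scope classical_set_scope.
Local Open Scope ring_scope.

Section Defs.
Context {R : realType}.

Definition unit_sq : set (R * R) :=
  [set x | (0 <= x.1 <= 1) /\ (0 <= x.2 <= 1)].

Definition psi (T j : nat) (x : R) : R :=
  if ((j%:R - 1) / T%:R <= x <= (j%:R + 1) / T%:R) && (0 <= x <= 1)
  then 1 - `|T%:R * x - j%:R| else 0.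

Definition monotone_allocs : set (set (R * R)) :=
  [set G | exists f : R -> R,
     (forall a b, 0 <= a -> a <= b -> b <= 1 -> f b <= f a) /\
     (forall a, 0 <= a <= 1 -> 0 <= f a <= 1) /\
     G = [set x | unit_sq x /\ x.2 <= f x.1]].

Definition sieve_allocs (k : nat) : set (set (R * R)) :=
  let T := (2 ^ (k.-1))%N in
  [set G | exists theta : nat -> R,
     (forall j, (j < T)%N -> theta j.+1 <= theta j) /\
     G = [set x | unit_sq x /\
                  x.2 <= \sum_(0 <= j < T.+1) theta j * psi T j x.1]].

Definition welfare {d} {Om : measurableType d} (P : probability Om R)
  (Y D : Om -> R) (X : Om -> R * R) (e : R * R -> R) (G : set (R * R)) : \bar R :=
  (\int[P]_w ((Y w * D w / e (X w) - Y w * (1 - D w) / (1 - e (X w)))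
               * \1_G (X w))%:E)%E.

Definition opt_welfare {d} {Om : measurableType d} (P : probability Om R)
  (Y D : Om -> R) (X : Om -> R * R) (e : R * R -> R) (Alloc : set (set (R * R)))
  : \bar R :=
  ereal_sup [set welfare P Y D X e G | G in Alloc].

End Defs.

(* Main.v *)
Require Import Defs.
From HB Require Import structures.
From mathcomp Require Import all_boot all_order all_algebra.
From mathcomp Require Import all_classical all_reals all_analysis.
From mathcomp Require Import lra zify ring.
From mathcomp Require Import measurable_realfun.
Import Order.TTheory GRing.Theory Num.Theory.
Import numFieldNormedType.Exports.
Local Open Scope classical_set_scope.
Local Open Scope ring_scope.

Section Interp.
Context {R : realType}.

Lemma psi_other (T i j : nat) (x : R) : (0 < T)%N -> i != j -> i != j.+1 ->
  j%:R <= T%:R * x <= j%:R + 1 -> psi T i x = 0.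
Proof.
move=> T0 ij ij1 /andP[h1 h2]; rewrite /psi.
have T0' : (0:R) < T%:R by rewrite ltr0n.
case: ifP => // /andP[/andP[c1 c2] _].
rewrite ler_pdivrMr // in c1; rewrite ler_pdivlMr // in c2.
have [lt|gt] := ltnP i j.
  have : (i.+1 <= j)%N by [].
  rewrite -(ler_nat R) -addn1 natrD => hh.
  have -> : T%:R * x - i%:R = 1 by lra.
  by rewrite normr1 subrr.
have : (j.+2 <= i)%N by rewrite ltn_neqAle eq_sym ij1 /= ltn_neqAle eq_sym ij gt.
rewrite -(ler_nat R) -addn2 natrD => hh.
have -> : T%:R * x - i%:R = -1 by lra.
by rewrite normrN1 subrr.
Qed.

Lemma psi_j (T j : nat) (x : R) : (0 < T)%N -> 0 <= x <= 1 ->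
  j%:R <= T%:R * x <= j%:R + 1 -> psi T j x = 1 - (T%:R * x - j%:R).
Proof.
move=> T0 x01 /andP[h1 h2]; rewrite /psi.
have T0' : (0:R) < T%:R by rewrite ltr0n.
rewrite x01 ler_pdivrMr // ler_pdivlMr // andbT.
have -> : (j%:R - 1 <= x * T%:R) = true by apply/idP; lra.
have -> : (x * T%:R <= j%:R + 1) = true by apply/idP; lra.
by rewrite ger0_norm //; lra.
Qed.

Lemma psi_j1 (T j : nat) (x : R) : (0 < T)%N -> 0 <= x <= 1 ->
  j%:R <= T%:R * x <= j%:R + 1 -> psi T j.+1 x = T%:R * x - j%:R.
Proof.
move=> T0 x01 /andP[h1 h2]; rewrite /psi.
have T0' : (0:R) < T%:R by rewrite ltr0n.
rewrite x01 ler_pdivrMr // ler_pdivlMr // andbT -addn1 natrD.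
have -> : (j%:R + 1%:R - 1 <= x * T%:R) = true by apply/idP; lra.
have -> : (x * T%:R <= j%:R + 1%:R + 1) = true by apply/idP; lra.
by rewrite ler0_norm /=; lra.
Qed.

Lemma interp (T : nat) (theta : nat -> R) (x : R) : (0 < T)%N -> 0 <= x <= 1 ->
  (forall j, (j < T)%N -> theta j.+1 <= theta j) ->
  exists j, [/\ (j < T)%N, j%:R <= T%:R * x <= j%:R + 1 &
    theta j.+1 <= \sum_(0 <= i < T.+1) theta i * psi T i x <= theta j].
Proof.
move=> T0 x01 mono.
have T0' : (0:R) < T%:R by rewrite ltr0n.
have [j [jT hj]] : exists j, (j < T)%N /\ j%:R <= T%:R * x <= j%:R + 1.
  have tx0 : 0 <= T%:R * x by apply: mulr_ge0; [exact: ltW|case/andP: x01].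
  have := Num.Theory.truncn_itv tx0; set n := Num.truncn _ => /andP[n1 n2].
  have [nT|nT] := ltnP n T.
    by exists n; split => //; rewrite -natr1 in n2; apply/andP; split; lra.
  exists T.-1; split; first by rewrite prednK // leqnn.
  have hT : T%:R <= (n%:R : R) by rewrite ler_nat.
  have x1 : x <= 1 by case/andP: x01.
  have : T%:R * x <= T%:R by rewrite -[X in _ <= X]mulr1 ler_pM2l.
  have eT : (T.-1%:R : R) + 1 = T%:R by rewrite natr1 prednK.
  move=> hh; apply/andP; split; lra.
exists j; split => //.
rewrite (big_cat_nat _ (n:=j)) //=; last by lia.
rewrite [X in _ + X]big_ltn; last by lia.
rewrite [X in _ + (_ + X)]big_ltn; last by lia.
rewrite big_nat_cond big1; last first.
  move=> i /andP[/andP[_ ij] _]; rewrite (@psi_other T i j) ?mulr0 //; lia.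
rewrite big_nat_cond big1; last first.
  move=> i /andP[/andP[ij _] _]; rewrite (@psi_other T i j) ?mulr0 //; lia.
rewrite psi_j // psi_j1 // add0r addr0.
have m := mono j jT.
move/andP: hj => [h1 h2].
set t := T%:R * x - j%:R.
have t0 : 0 <= t by rewrite /t; lra.
have t1 : t <= 1 by rewrite /t; lra.
apply/andP; split; nra.
Qed.

Lemma geom (T : nat) (f : R -> R) (a b : R) : (0 < T)%N ->
  (forall a b, 0 <= a -> a <= b -> b <= 1 -> f b <= f a) ->
  0 <= a <= 1 ->
  ~ ((b <= f a) <-> (b <= \sum_(0 <= j < T.+1) f (j%:R / T%:R) * psi T j a)) ->
  exists2 j, (j < T)%N & (j%:R / T%:R <= a <= j.+1%:R / T%:R) &&
     (f (j.+1%:R / T%:R) <= b <= f (j%:R / T%:R)).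
Proof.
move=> T0 fm a01 hne.
have T0' : (0:R) < T%:R by rewrite ltr0n.
have fr j : (j <= T)%N -> 0 <= (j%:R / T%:R : R) <= 1.
  move=> jT; apply/andP; split; first by apply: divr_ge0; rewrite ?ler0n ?ltW.
  by rewrite ler_pdivrMr // mul1r ler_nat.
have mono j : (j < T)%N -> f (j.+1%:R / T%:R) <= f (j%:R / T%:R).
  move=> jT; have /andP[h1 _] := fr j (ltnW jT); have /andP[_ h2] := fr j.+1 jT.
  apply: fm => //; rewrite ler_pM2r ?invr_gt0 // ler_nat; exact: leqnSn.
have [j [jT hj hg]] := interp T (fun j => f (j%:R / T%:R)) a T0 a01 mono.
exists j => //.
move/andP: hj => [hj1 hj2]; move/andP: a01 => [a0 a1].
have l1 : j%:R / T%:R <= a by rewrite ler_pdivrMr // mulrC.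
have l2 : a <= j.+1%:R / T%:R by rewrite ler_pdivlMr // -natr1 mulrC.
have /andP[fj0 _] := fr j (ltnW jT); have /andP[_ fj1] := fr j.+1 jT.
have f1 : f a <= f (j%:R / T%:R) by apply: fm.
have f2 : f (j.+1%:R / T%:R) <= f a by apply: fm.
rewrite l1 l2 /=.
move/andP: hg => [g1 g2].
set g := \sum_(0 <= i < T.+1) _ in hne g1 g2.
case: (lerP b (f a)) => hb; case: (lerP b g) => hb2.
- by exfalso; apply: hne; split.
- by apply/andP; split; [apply: ltW; apply: le_lt_trans hb2 | apply: le_trans f1].
- by apply/andP; split; [apply: ltW; apply: le_lt_trans hb | apply: le_trans g2].
- by exfalso; apply: hne; split => h; [move: (le_lt_trans h hb); rewrite ltxx | move: (le_lt_trans h hb2); rewrite ltxx].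
Qed.

End Interp.

Section Meas.
Context {R : realType}.

Lemma unit_sqE : (unit_sq : set (R * R)) = [set` `[0:R, 1]] `*` [set` `[0:R, 1]].
Proof. by apply/seteqP; split => -[a b]; rewrite /unit_sq /= !in_itv. Qed.

Lemma unit_sq_meas : measurable (unit_sq : set (R * R)).
Proof. by rewrite unit_sqE; apply: measurableX; exact: measurable_itv. Qed.

Lemma subgraph_meas (phi : R -> R) : measurable_fun setT phi ->
  measurable [set x : R * R | unit_sq x /\ x.2 <= phi x.1].
Proof.
move=> mphi.
have := @measurable_fun_le _ _ R unit_sq snd (phi \o fst) unit_sq_meas.
have h1 : measurable_fun unit_sq (@snd R R).
  exact: measurable_funTS measurable_snd.
have h2 : measurable_fun unit_sq (phi \o @fst R R).
  apply: measurable_funTS; exact: measurableT_comp mphi measurable_fst.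
by move=> /(_ h1 h2).
Qed.

Lemma psi_meas (T j : nat) : measurable_fun setT (@psi R T j).
Proof.
pose S := [set x : R | ((j%:R - 1) / T%:R <= x <= (j%:R + 1) / T%:R) && (0 <= x <= 1)].
have -> : @psi R T j = (fun x => \1_S x * (1 - `|T%:R * x - j%:R|)).
  apply/funext => x; rewrite /psi indicE.
  case: (boolP (x \in S)) => xS; [rewrite in_setE in xS|rewrite notin_setE in xS].
    by rewrite /S /= in xS; rewrite xS mul1r.
  by rewrite /S /= in xS; rewrite (negbTE (introN idP xS)) mul0r.
have -> : S = [set` `[(j%:R - 1) / T%:R, (j%:R + 1) / T%:R]] `&` [set` `[0:R, 1]].
  by apply/seteqP; split => x; rewrite /S /= !in_itv /= => /andP.
apply: measurable_funM.
  apply: measurable_indic; apply: measurableI; exact: measurable_itv.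
apply: measurable_funB; first exact: measurable_cst.
apply: measurableT_comp; first exact: measurable_realfun.normr_measurable.
apply: measurable_funB; last exact: measurable_cst.
apply: measurable_funM; [exact: measurable_cst|exact: measurable_id].
Qed.

Lemma sieve_fun_meas (T : nat) (theta : nat -> R) :
  measurable_fun setT (fun x => \sum_(0 <= j < T.+1) theta j * @psi R T j x).
Proof.
apply: measurable_sum => i; apply: measurable_funM; [exact: measurable_cst|exact: psi_meas].
Qed.

Definition clamp (a : R) : R := Num.min 1 (Num.max 0 a).

Lemma clamp_ge0 a : 0 <= clamp a.
Proof. by rewrite /clamp le_min ler01 le_max lexx. Qed.
Lemma clamp_le1 a : clamp a <= 1.
Proof. by rewrite /clamp ge_min lexx. Qed.
Lemma clamp_mono a b : a <= b -> clamp a <= clamp b.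
Proof. by move=> ab; rewrite /clamp le_min2 // le_max2. Qed.
Lemma clamp_id a : 0 <= a <= 1 -> clamp a = a.
Proof. by move=> /andP[a0 a1]; rewrite /clamp (max_r a0) (min_r a1). Qed.

Lemma mono_set_meas (f : R -> R) :
  (forall a b, 0 <= a -> a <= b -> b <= 1 -> f b <= f a) ->
  measurable [set x : R * R | unit_sq x /\ x.2 <= f x.1].
Proof.
move=> fmono.
have -> : [set x : R * R | unit_sq x /\ x.2 <= f x.1] =
          [set x : R * R | unit_sq x /\ x.2 <= f (clamp x.1)].
  by apply/seteqP; split => -[a b] /= [[a01 b01] h]; split => //;
    rewrite ?clamp_id // in h *.
apply: (@subgraph_meas (fun a => f (clamp a))); apply: (@nonincreasing_measurable R setT (fun a => f (clamp a))) => //.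
move=> a b ab; apply: fmono; [exact: clamp_ge0|exact: clamp_mono|exact: clamp_le1].
Qed.

End Meas.

Section Core.
Context {R : realType} {d : measure_display} {Om : measurableType d}.
Variable P : probability Om R.

Lemma bdd_integrable (h : Om -> R) (N : set Om) (c : R) :
  measurable_fun setT h -> measurable N -> P N = 0%E -> 0 <= c ->
  (forall w, ~ N w -> `|h w| <= c) ->
  P.-integrable setT (EFin \o h).
Proof.
move=> mh mN PN c0 hc; apply/integrableP; split; first exact/measurable_EFinP.
apply: (@le_lt_trans _ _ (\int[P]_(w in setT) (cst c%:E) w)%E).
  have m1 : measurable_fun setT (fun w => `|(EFin \o h) w|%E).
    by apply: measurableT_comp => //; exact/measurable_EFinP.
  have m2 : measurable_fun setT (cst c%:E : Om -> \bar R) by exact: measurable_cst.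
  apply: (ae_ge0_le_integral measurableT _ m1 _ m2).
  - by move=> w _; rewrite abse_ge0.
  - by move=> w _; rewrite /= lee_fin.
  - exists N; split => // w /= hw; apply: contra_notP hw => Nw _.
    by rewrite /= lee_fin; apply: hc.
rewrite integral_cst //.
have H : forall x : \bar R, x = 1%E -> (c%:E * x < +oo)%E by move=> x ->; rewrite mule1 ltry.
by apply: H; exact: probability_setT.
Qed.

Lemma core (h : Om -> R) (S S' N : set Om) (Q : nat -> set Om) (n : nat) (c : R) :
  measurable_fun setT h -> measurable S -> measurable S' ->
  (forall j, measurable (Q j)) -> measurable N -> P N = 0%E -> 0 <= c ->
  (forall w, ~ N w -> `|h w| <= c) ->
  (forall w, (w \in S) != (w \in S') -> exists2 j, (j < n)%N & Q j w) ->
  (\int[P]_w (h w * \1_S w)%:E <=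
     \int[P]_w (h w * \1_S' w)%:E + c%:E * \sum_(0 <= j < n) P (Q j))%E.
Proof.
move=> mh mS mS' mQ mN PN c0 hc hQ.
have mu A : measurable A -> measurable_fun setT (fun w => h w * \1_A w).
  by move=> mA; apply: measurable_funM => //; exact: measurable_indic.
have iu A : measurable A -> P.-integrable setT (EFin \o (fun w => h w * \1_A w)).
  move=> mA; apply: (@bdd_integrable (fun w => h w * \1_A w) N c (mu A mA) mN PN c0) => w Nw.
  rewrite normrM indicE; case: (w \in A); rewrite ?normr1 ?normr0 ?mulr1 ?mulr0 //.
  exact: hc.
pose wf := fun w => c * \sum_(0 <= j < n) \1_(Q j) w.
have mwf : measurable_fun setT wf.
  apply: measurable_funM; first exact: measurable_cst.
  by apply: measurable_sum => j; exact: measurable_indic.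
have wf0 w : 0 <= wf w.
  by apply: mulr_ge0 => //; apply: sumr_ge0 => j _; rewrite indicE ler0n.
have Iwf : (\int[P]_w (wf w)%:E = c%:E * \sum_(0 <= j < n) P (Q j))%E.
  rewrite /wf.
  under eq_integral do rewrite EFinM.
  rewrite ge0_integralZl //.
  congr (_ * _)%E.
  under eq_integral do rewrite -sumEFin.
  rewrite ge0_integral_sum //.
  by apply: eq_bigr => j _; rewrite integral_indic // setIT.
  - by move=> j; apply: measurableT_comp => //; exact: measurable_indic.
  - by apply: measurableT_comp => //; apply: measurable_sum => j; exact: measurable_indic.
  - by move=> x _; rewrite lee_fin; apply: sumr_ge0 => j _; rewrite indicE ler0n.
have iwf : P.-integrable setT (EFin \o wf).
  apply/integrableP; split; first exact/measurable_EFinP.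
  rewrite (eq_integral (fun x => (wf x)%:E)); last first.
    by move=> x _ /=; rewrite ger0_norm.
  rewrite Iwf; apply: lte_mul_pinfty; rewrite ?lee_fin ?fin_numE //.
  apply: lte_sum_pinfty => j _.
  exact: (le_lt_trans (probability_le1 P (mQ j)) (ltry _)).
have mTN : measurable (setT `\` N) by apply: measurableD.
have sub : setT `\` N `<=` setT by [].
rewrite (negligible_integral mN measurableT (iu S mS) PN).
rewrite (negligible_integral mN measurableT (iu S' mS') PN).
rewrite -Iwf (negligible_integral mN measurableT iwf PN).
rewrite -(integralD_EFin mTN (integrableS measurableT mTN sub (iu S' mS'))
  (integrableS measurableT mTN sub iwf)).
apply: le_integral => //.
- exact: (integrableS measurableT mTN sub (iu S mS)).
- apply: integrableD => //.
    exact: (integrableS measurableT mTN sub (iu S' mS')).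
  exact: (integrableS measurableT mTN sub iwf).
move=> w; rewrite inE => -[_ Nw] /=; rewrite lee_fin.
have hw := hc w Nw.
have h1 := ler_norm (h w).
have h2 : - h w <= `|h w| by rewrite -normrN ler_norm.
case: (boolP ((w \in S) != (w \in S'))) => hne.
  have [j jn Qj] := hQ w hne.
  have s1 : 1 <= \sum_(0 <= j < n) \1_(Q j) w :> R.
    rewrite big_mkord (bigD1 (Ordinal jn)) //=.
    have -> : \1_(Q j) w = 1 :> R by rewrite indicE mem_set.
    by rewrite lerDl; apply: sumr_ge0 => i _; rewrite indicE ler0n.
  rewrite /wf; move: hne; rewrite ?indicE.
  case: (w \in S); case: (w \in S') => //= _; rewrite ?mulr1 ?mulr0; nra.
move: hne; rewrite negbK => /eqP hSS; rewrite ?indicE hSS lerDl; exact: wf0.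
Qed.

End Core.

Section Dens.
Context {R : realType}.

Lemma leb_itv (a b : R) : a <= b -> (@lebesgue_measure R [set` `[a, b]] = (b - a)%:E)%E.
Proof.
move=> ab; rewrite lebesgue_measure_itv /=.
case: ifPn => h; first by rewrite -EFinD.
move: h; rewrite lte_fin -leNgt => ba.
have ba' : b = a by apply/le_anti; rewrite ba ab.
by rewrite ba' subrr.
Qed.

Lemma rect_bound d (Om : measurableType d) (P : probability Om R) (X : Om -> R * R)
  (A : R) (dens : R * R -> R) :
  measurable_fun setT dens -> (forall x, 0 <= dens x <= A) ->
  (forall B : set (R * R), measurable B ->
       P (X @^-1` B) =
       (\int[(@lebesgue_measure R \x @lebesgue_measure R)%E]_(x in B `&` unit_sq)
          (dens x)%:E)%E) ->
  forall a b c e : R, a <= b -> c <= e ->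
  (P (X @^-1` ([set` `[a, b]] `*` [set` `[c, e]])) <= (A * ((b - a) * (e - c)))%:E)%E.
Proof.
move=> md hd hP a b c e ab ce.
have A0 : 0 <= A by case/andP: (hd (0,0)) => h1 h2; exact: le_trans h2.
have mB : measurable ([set` `[a, b]] `*` [set` `[c, e]] : set (R * R)).
  by apply: measurableX; exact: measurable_itv.
have mU : measurable (unit_sq : set (R * R)) by exact: unit_sq_meas.
rewrite hP //.
apply: (@le_trans _ _ (\int[(@lebesgue_measure R \x @lebesgue_measure R)%E]_(x in
   [set` `[a, b]] `*` [set` `[c, e]] `&` unit_sq) (cst A%:E) x)%E).
  apply: ge0_le_integral => //.
  - by apply: measurableI.
  - by move=> x _; rewrite lee_fin; case/andP: (hd x).
  - apply/measurable_EFinP; exact: measurable_funTS md.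
  - by move=> x _; rewrite lee_fin; case/andP: (hd x).
rewrite integral_cst; last exact: measurableI.
rewrite EFinM; apply: lee_wpmul2l; first by rewrite lee_fin.
apply: (@le_trans _ _ ((@lebesgue_measure R \x @lebesgue_measure R)%E
   ([set` `[a, b]] `*` [set` `[c, e]]))).
  by apply: le_measure => //; rewrite inE //; apply: measurableI.
rewrite product_measure1E; try exact: measurable_itv.
have H : forall x y : \bar R, x = (b - a)%:E -> y = (e - c)%:E ->
  (x * y <= ((b - a) * (e - c))%:E)%E by move=> x y -> ->; rewrite EFinM.
by apply: H; exact: leb_itv.
Qed.

End Dens.

Theorem proposition5p1 (R : realType) (d : measure_display) (Om : measurableType d)
  (P : probability Om R) (Y D : Om -> R) (X : Om -> R * R) (e : R * R -> R)
  (M kappa A : R) (k : nat) :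
  0 < kappa -> kappa < 1 / 2 -> 0 < A -> (1 <= k)%N ->
  measurable_fun setT Y -> measurable_fun setT D -> measurable_fun setT X ->
  (* support of Y in [-M/2, M/2] *)
  P [set w | - (M / 2) <= Y w <= M / 2] = 1%E ->
  (* D in {0,1} *)
  P [set w | D w = 0 \/ D w = 1] = 1%E ->
  (* X has a density w.r.t. Lebesgue measure on [0,1]^2, bounded above by A *)
  (exists f : R * R -> R, measurable_fun setT f /\ (forall x, 0 <= f x <= A) /\
     forall B : set (R * R), measurable B ->
       P (X @^-1` B) =
       (\int[(@lebesgue_measure R \x @lebesgue_measure R)%E]_(x in B `&` unit_sq)
          (f x)%:E)%E) ->
  (* e is (a version of) the propensity score E[D | X], with values in [kappa, 1-kappa] *)
  measurable_fun setT e ->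
  (forall x, kappa <= e x <= 1 - kappa) ->
  (forall B : set (R * R), measurable B ->
     (\int[P]_w (D w * \1_B (X w))%:E = \int[P]_w (e (X w) * \1_B (X w))%:E)%E) ->
  (opt_welfare P Y D X e monotone_allocs - opt_welfare P Y D X e (sieve_allocs k)
     <= (A * (M / kappa) * 2 ^- k)%:E)%E.

Proof.
move=> k0 k12 A0 k1 mY mD mX PY PD [dens [mdens [hdens hP]]] me he hprop.
set T := (2 ^ k.-1)%N.
have T0 : (0 < T)%N by rewrite expn_gt0.
have T0' : (0:R) < T%:R by rewrite ltr0n.
set E1 := [set w | - (M / 2) <= Y w <= M / 2].
set E2 := [set w | D w = 0 \/ D w = 1].
have mE1 : measurable E1.
  have -> : E1 = Y @^-1` [set` `[- (M / 2), M / 2]].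
    by apply/seteqP; split => w; rewrite /E1 /= in_itv.
  by rewrite -[X in measurable X]setTI; apply: mY => //; exact: measurable_itv.
have mE2 : measurable E2.
  have -> : E2 = D @^-1` ([set 0] `|` [set 1]) by [].
  by rewrite -[X in measurable X]setTI; apply: mD => //; apply: measurableU.
set N := ~` (E1 `&` E2).
have mN : measurable N by apply: measurableC; apply: measurableI.
have PN : P N = 0%E.
  have P1 : P (~` E1) = 0%E by rewrite probability_setC // PY subee.
  have P2 : P (~` E2) = 0%E by rewrite probability_setC // PD subee.
  apply/le_anti/andP; split; last exact: measure_ge0.
  rewrite /N setCI; apply: le_trans (measureU2 _ _ _) _; try exact: measurableC.
  have H : forall x y : \bar R, x = 0%E -> y = 0%E -> (x + y <= 0)%E.
    by move=> x y -> ->; rewrite adde0.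
  by apply: H; [exact: P1|exact: P2].
have M0 : 0 <= M.
  case: (lerP 0 M) => // M0; exfalso.
  have E10 : E1 = set0 by apply/seteqP; split => w //= /andP[h1 h2]; lra.
  move: PY; rewrite -/E1 E10.
  have H : forall x : \bar R, x = 0%E -> x = 1%E -> False.
    by move=> x -> /eqP; rewrite eqe eq_sym oner_eq0.
  by apply: H; exact: measure0.
set c := M / 2 / kappa.
have c0 : 0 <= c by rewrite /c; apply: divr_ge0; [lra|exact: ltW].
set h := fun w => Y w * D w / e (X w) - Y w * (1 - D w) / (1 - e (X w)).
have mh : measurable_fun setT h.
  pose phi := fun t : R => (Num.max kappa t)^-1.
  have mphi : measurable_fun setT phi.
    apply: nonincreasing_measurable => // s t st; rewrite /phi.
    rewrite lef_pV2 ?posrE ?lt_max ?k0 //; exact: le_max2.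
  have -> : h = (fun w => Y w * D w * phi (e (X w)) - Y w * (1 - D w) * phi (1 - e (X w))).
    apply/funext => w; have /andP[e1 e2] := he (X w).
    by rewrite /h /phi !max_r //; lra.
  apply: measurable_funB; apply: measurable_funM.
  - exact: measurable_funM.
  - by apply: measurableT_comp => //; apply: measurableT_comp.
  - by apply: measurable_funM => //; apply: measurable_funB => //; exact: measurable_cst.
  - apply: measurableT_comp => //; apply: measurable_funB; first exact: measurable_cst.
    exact: measurableT_comp.
have hc : forall w, ~ N w -> `|h w| <= c.
  move=> w Nw.
  have [hE1 hE2] : (E1 `&` E2) w by apply: (contra_notP _ Nw) => H; exact: H.
  have hY : `|Y w| <= M / 2 by rewrite ler_norml.
  have /andP[e1 e2] := he (X w).
  case: hE2 => Dw; rewrite /h Dw.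
  - rewrite mulr0 mul0r sub0r subr0 mulr1 normrN normrM normfV (ger0_norm (x := 1 - e (X w))); last lra.
    rewrite /c; apply: ler_pM => //; first by rewrite invr_ge0; lra.
    by rewrite lef_pV2 ?posrE //; lra.
  - rewrite subrr mulr0 mul0r subr0 mulr1 normrM normfV (ger0_norm (x := e (X w))); last lra.
    rewrite /c; apply: ler_pM => //; first by rewrite invr_ge0; lra.
    by rewrite lef_pV2 ?posrE //; lra.
pose bnd := (A * (M / kappa) * 2 ^- k)%:E.
suff key : (opt_welfare P Y D X e monotone_allocs <=
            opt_welfare P Y D X e (sieve_allocs k) + bnd)%E.
  move: key; case: (opt_welfare P Y D X e (sieve_allocs k)) => [r| |] key.
  - by rewrite leeBlDr // addeC.
  - by rewrite addeNy leNye.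
  - by move: key; rewrite addNye leeNy_eq => /eqP ->; rewrite addNye leNye.
rewrite {1}/opt_welfare; apply: ge_ereal_sup => _ [G [f [fm [fr ->]]] <-].
set th := fun j : nat => f (j%:R / T%:R).
set Gs := [set x : R * R | unit_sq x /\ x.2 <= f x.1].
set G' := [set x : R * R | unit_sq x /\ x.2 <= \sum_(0 <= j < T.+1) th j * psi T j x.1].
have fr01 j : (j <= T)%N -> 0 <= (j%:R / T%:R : R) <= 1.
  move=> jT; apply/andP; split; first by apply: divr_ge0; rewrite ?ler0n ?ltW.
  by rewrite ler_pdivrMr // mul1r ler_nat.
have thm j : (j < T)%N -> th j.+1 <= th j.
  move=> jT; have /andP[h1 _] := fr01 j (ltnW jT); have /andP[_ h2] := fr01 j.+1 jT.
  apply: fm => //; rewrite ler_pM2r ?invr_gt0 // ler_nat; exact: leqnSn.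
have G'in : sieve_allocs k G' by exists th; split.
apply: (@le_trans _ _ (welfare P Y D X e G' + bnd)%E); last first.
  apply: leeD2r; apply: ereal_sup_ubound; by exists G'.
pose Q := fun j : nat => X @^-1` ([set` `[j%:R / T%:R, j.+1%:R / T%:R]] `*` [set` `[th j.+1, th j]]).
have mpre (B : set (R * R)) : measurable B -> measurable (X @^-1` B).
  by move=> mB; rewrite -[X in measurable X]setTI; apply: mX.
have mS : measurable (X @^-1` Gs) by apply: mpre; exact: mono_set_meas.
have mS' : measurable (X @^-1` G') by apply: mpre; exact (subgraph_meas _ (sieve_fun_meas T th)).
have mQ j : measurable (Q j) by apply: mpre; apply: measurableX; exact: measurable_itv.
have hQ : forall w, (w \in X @^-1` Gs) != (w \in X @^-1` G') -> exists2 j, (j < T)%N & Q j w.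
  move=> w hne.
  case: (pselect (unit_sq (X w))) => hu; last first.
    exfalso; move: hne.
    have s1 : (w \in X @^-1` Gs) = false by apply/negbTE; rewrite notin_setE => -[/hu].
    have s2 : (w \in X @^-1` G') = false by apply/negbTE; rewrite notin_setE => -[/hu].
    by rewrite s1 s2.
  have [a01 _] := hu.
  have niff : ~ (((X w).2 <= f (X w).1) <->
      ((X w).2 <= \sum_(0 <= j < T.+1) f (j%:R / T%:R) * psi T j (X w).1)).
    move=> hiff; move: hne.
    suff -> : (w \in X @^-1` Gs) = (w \in X @^-1` G') by rewrite eqxx.
    apply/idP/idP => /set_mem [_ hb]; apply/mem_set; split => //; exact/hiff.
  have [j jT hj] := geom T f (X w).1 (X w).2 T0 fm a01 niff.
  exists j => //; move/andP: hj => [h1 h2].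
  by split => /=; rewrite in_itv.
apply: le_trans (core P _ _ _ _ _ _ _ mh mS mS' mQ mN PN c0 hc hQ) _.
apply: leeD2l.
have dj j : j.+1%:R / T%:R - j%:R / T%:R = T%:R^-1 :> R.
  by rewrite -natr1 mulrDl mul1r addrAC subrr add0r.
have hPQ j : (j < T)%N -> (P (Q j) <= (A * (T%:R^-1 * (th j - th j.+1)))%:E)%E.
  move=> jT; rewrite -(dj j); apply: (rect_bound _ _ _ _ _ _ mdens hdens hP).
    by rewrite ler_pM2r ?invr_gt0 // ler_nat.
  exact: thm.
apply: (@le_trans _ _ (c%:E * \sum_(0 <= j < T) (A * (T%:R^-1 * (th j - th j.+1)))%:E)%E).
  apply: lee_wpmul2l; first by rewrite lee_fin.
  by rewrite big_nat_cond [X in (_ <= X)%E]big_nat_cond; apply: lee_sum => j /andP[/andP[_ jT] _]; exact: hPQ.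
rewrite sumEFin -EFinM /bnd lee_fin.
rewrite -big_distrr /= -big_distrr /=.
have tel : \sum_(0 <= j < T) (th j - th j.+1) = th 0%N - th T.
  rewrite -opprB -(telescope_sumr _ (leq0n T)) -sumrN; apply: eq_bigr => j _; by rewrite opprB.
rewrite tel.
have h0 : 0 <= (0:R) <= 1 by rewrite lexx ler01.
have h1 : 0 <= (1:R) <= 1 by rewrite ler01 lexx.
have th0 : th 0%N <= 1 by rewrite /th mul0r; case/andP: (fr 0 h0).
have thT : 0 <= th T by rewrite /th divff ?lt0r_neq0 //; case/andP: (fr 1 h1).
have Te : (T%:R : R) = 2 ^+ k.-1 by rewrite natrX.
have ke : (2:R) ^+ k = 2 * 2 ^+ k.-1 by rewrite -exprS prednK.
have eqK : c * A * T%:R^-1 = A * (M / kappa) * 2 ^- k.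
  rewrite Te ke /c; field.
  by apply/andP; split; [apply: expf_neq0; rewrite pnatr_eq0 | exact: lt0r_neq0].
rewrite [leLHS]mulrA [leLHS]mulrA eqK -[leRHS]mulr1; apply: ler_wpM2l; last lra.
rewrite -eqK; apply: mulr_ge0; [apply: mulr_ge0 => //; exact: ltW|].
by rewrite invr_ge0 ltW.
Qed.
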